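(* Let $\langle L,\leq\rangle$ and $\langle K,\leq\rangle$ be complete lattices and $f:L\to K$ a surjective lattice morphism. Let $O:L\to L$ be an operator and $A:L^2\to L^2$ an approximator of $O$ such that both $O$ and $A$ respect $f$, and let $O_f$ and $A_f$ be their projections on $K$. If $(x,y)$ is the $A$-well-founded fixpoint of $O$, then $(f(x),f(y))$ is the $A_f$-well-founded fixpoint of $O_f$.
   Context: A lattice morphism $f:L\to K$ satisfies $f(\bigvee X)=\bigvee f(X)$ and $f(\bigwedge X)=\bigwedge f(X)$ for all $X\subseteq L$. $L^2$ carries the precision order $(x,y)\leq_p(u,v)$ iff $x\leq u$ and $v\leq y$; write $(x,y)_1=x,(x,y)_2=y$. An approximator of $O$ is a $\leq_p$-monotone $A:L^2\to L^2$ with $A(x,x)_1\leq O(x)\leq A(x,x)_2$ for all $x$, assumed symmetric ($A(x,y)_1=A(y,x)_2$). $O$ respects $f$ if $f(x)=f(y)$ implies $f(O(x))=f(O(y))$; then (for surjective $f$) $O_f$ is the unique operator on $K$ with $O_f\circ f=f\circ O$. With $f^2(x,y)=(f(x),f(y))$, $A$ respects $f$ if $f^2(p)=f^2(q)$ implies $f^2(A(p))=f^2(A(q))$; $A_f$ is the unique operator on $K^2$ with $A_f\circ f^2=f^2\circ A$. For an operator $B$ on a bilattice $M^2$ (and any operator $P$ on $M$), a partial $B$-stable fixpoint is a pair $(x,y)$ with $x=\mathrm{lfp}(B(\cdot,y)_1)$ and $y=\mathrm{lfp}(B(x,\cdot)_2)$; the $B$-well-founded fixpoint of $P$ is the $\leq_p$-least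 (least precise) partial $B$-stable fixpoint. *)

(* Defs.v *)
Record complete_lattice := CompleteLattice {
  carrier :> Type;
  le : carrier -> carrier -> Prop;
  le_refl : forall x, le x x;
  le_trans : forall x y z, le x y -> le y z -> le x z;
  le_antisym : forall x y, le x y -> le y x -> x = y;
  sup : (carrier -> Prop) -> carrier;
  sup_ub : forall (X : carrier -> Prop) x, X x -> le x (sup X);
  sup_least : forall (X : carrier -> Prop) u,
      (forall x, X x -> le x u) -> le (sup X) u;
  inf : (carrier -> Prop) -> carrier;
  inf_lb : forall (X : carrier -> Prop) x, X x -> le (inf X) x;
  inf_greatest : forall (X : carrier -> Prop) u,
      (forall x, X x -> le u x) -> le u (inf X)
}.

Arguments le {c} _ _.
Arguments sup {c} _.
Arguments inf {c} _.

Definition image {L K : Type} (f : L -> K) (X : L -> Prop) : K -> Prop :=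
  fun y => exists x, X x /\ f x = y.

Definition lattice_morphism {L K : complete_lattice} (f : L -> K) : Prop :=
  forall X : L -> Prop, f (sup X) = sup (image f X) /\ f (inf X) = inf (image f X).

Definition surjective {L K : Type} (f : L -> K) : Prop :=
  forall y, exists x, f x = y.

Definition lep {L : complete_lattice} (p q : L * L) : Prop :=
  le (fst p) (fst q) /\ le (snd q) (snd p).

Definition approximator {L : complete_lattice} (A : L * L -> L * L) (O : L -> L) : Prop :=
  (forall p q, lep p q -> lep (A p) (A q)) /\
  (forall x, le (fst (A (x, x))) (O x) /\ le (O x) (snd (A (x, x)))) /\
  (forall x y, fst (A (x, y)) = snd (A (y, x))).

Definition f2 {L K : Type} (f : L -> K) (p : L * L) : K * K := (f (fst p), f (snd p)).

Definition respects_op {L K : Type} (f : L -> K) (O : L -> L) : Prop :=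
  forall x y, f x = f y -> f (O x) = f (O y).

Definition respects_approx {L K : Type} (f : L -> K) (A : L * L -> L * L) : Prop :=
  forall p q, f2 f p = f2 f q -> f2 f (A p) = f2 f (A q).

Definition is_lfp {M : complete_lattice} (P : M -> M) (x : M) : Prop :=
  P x = x /\ forall z, P z = z -> le x z.

Definition partial_stable_fixpoint {M : complete_lattice} (B : M * M -> M * M)
    (p : M * M) : Prop :=
  is_lfp (fun z => fst (B (z, snd p))) (fst p) /\
  is_lfp (fun z => snd (B (fst p, z))) (snd p).

Definition wf_fixpoint {M : complete_lattice} (B : M * M -> M * M) (p : M * M) : Prop :=
  partial_stable_fixpoint B p /\
  forall q, partial_stable_fixpoint B q -> lep p q.

(* Main.v *)
Require Import Defs.

Section Gen.

Lemma fmono {L K : complete_lattice} (f : L -> K) :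
  lattice_morphism f -> forall a b, le a b -> le (f a) (f b).
Proof.
  intros Hm a b Hab.
  set (F := fun z : L => z = a \/ z = b).
  assert (Hs : sup F = b).
  { apply le_antisym.
    - apply sup_least. intros z [->| ->]; [exact Hab | apply le_refl].
    - apply sup_ub. right; reflexivity. }
  destruct (Hm F) as [H1 _]. rewrite Hs in H1. rewrite H1.
  apply sup_ub. exists a. split; [left; reflexivity | reflexivity].
Qed.

Lemma join_pre {L K : complete_lattice} (f : L -> K) :
  lattice_morphism f -> forall a1 a2, le (f a1) (f a2) ->
  exists a, f a = f a2 /\ le a1 a.
Proof.
  intros Hm a1 a2 H.
  set (F := fun z : L => z = a1 \/ z = a2).
  exists (sup F). split.
  - destruct (Hm F) as [H1 _]. rewrite H1. apply le_antisym.
    + apply sup_least. intros w [z [[-> | ->] <-]]; [exact H | apply le_refl].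
    + apply sup_ub. exists a2. split; [right; reflexivity | reflexivity].
  - apply sup_ub. left; reflexivity.
Qed.

Lemma meet_pre {L K : complete_lattice} (f : L -> K) :
  lattice_morphism f -> forall a1 a2, le (f a2) (f a1) ->
  exists a, f a = f a2 /\ le a a1.
Proof.
  intros Hm a1 a2 H.
  set (F := fun z : L => z = a1 \/ z = a2).
  exists (inf F). split.
  - destruct (Hm F) as [_ H1]. rewrite H1. apply le_antisym.
    + apply inf_lb. exists a2. split; [right; reflexivity | reflexivity].
    + apply inf_greatest. intros w [z [[-> | ->] <-]]; [exact H | apply le_refl].
  - apply inf_lb. left; reflexivity.
Qed.

Lemma fib_sup {L K : complete_lattice} (f : L -> K) :
  lattice_morphism f -> forall a, f (sup (fun z => f z = f a)) = f a.
Proof.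
  intros Hm a. destruct (Hm (fun z => f z = f a)) as [H1 _]. rewrite H1.
  apply le_antisym.
  - apply sup_least. intros w [z [Hz <-]]. rewrite Hz. apply le_refl.
  - apply sup_ub. exists a. split; reflexivity.
Qed.

Lemma fib_inf {L K : complete_lattice} (f : L -> K) :
  lattice_morphism f -> forall a, f (inf (fun z => f z = f a)) = f a.
Proof.
  intros Hm a. destruct (Hm (fun z => f z = f a)) as [_ H1]. rewrite H1.
  apply le_antisym.
  - apply inf_lb. exists a. split; reflexivity.
  - apply inf_greatest. intros w [z [Hz <-]]. rewrite Hz. apply le_refl.
Qed.

Definition lfpM {M : complete_lattice} (P : M -> M) : M := inf (fun z => le (P z) z).

Definition monotone {M : complete_lattice} (P : M -> M) := forall a b, le a b -> le (P a) (P b).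

Lemma lfp_spec {M : complete_lattice} (P : M -> M) : monotone P -> is_lfp P (lfpM P).
Proof.
  intros Hp.
  assert (H1 : le (P (lfpM P)) (lfpM P)).
  { apply inf_greatest. intros z Hz. eapply le_trans; [|exact Hz].
    apply Hp. apply inf_lb. exact Hz. }
  split.
  - apply le_antisym; [exact H1|]. apply inf_lb. apply Hp. exact H1.
  - intros z Hz. apply inf_lb. rewrite Hz. apply le_refl.
Qed.

Lemma lfp_pre {M : complete_lattice} (P : M -> M) x : monotone P -> is_lfp P x ->
  forall z, le (P z) z -> le x z.
Proof.
  intros Hp [_ Hx] z Hz. destruct (lfp_spec P Hp) as [Hf _].
  eapply le_trans. apply Hx. exact Hf. apply inf_lb. exact Hz.
Qed.

Lemma lfp_unique {M : complete_lattice} (P : M -> M) x : monotone P -> is_lfp P x ->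
  x = lfpM P.
Proof.
  intros Hp Hx. destruct (lfp_spec P Hp) as [Hf Hl]. destruct Hx as [Hxf Hxl].
  apply le_antisym; [apply Hxl; exact Hf | apply Hl; exact Hxf].
Qed.

Lemma lfp_mono {M : complete_lattice} (P P' : M -> M) :
  (forall z, le (P z) (P' z)) -> le (lfpM P) (lfpM P').
Proof.
  intros H. apply inf_greatest. intros z Hz. apply inf_lb.
  eapply le_trans; [apply H | exact Hz].
Qed.

Lemma transfer {M N : complete_lattice} (f : M -> N)
  (Hfm : forall a b, le a b -> le (f a) (f b))
  (Hsu : forall w, exists z, f z = w)
  (Hfib : forall z, exists z1, f z1 = f z /\ forall z', f z' = f z -> le z' z1)
  (P : M -> M) (Hp : monotone P) (Q : N -> N) (HQ : forall z, Q (f z) = f (P z))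
  x : is_lfp P x -> is_lfp Q (f x).
Proof.
  intros Hx. split.
  - rewrite HQ. destruct Hx as [-> _]. reflexivity.
  - intros w Hw. destruct (Hsu w) as [z0 <-].
    destruct (Hfib z0) as [z1 [Hz1 Hmax]].
    assert (Hpz : le (P z1) z1).
    { apply Hmax. rewrite <- HQ, Hz1. exact Hw. }
    rewrite <- Hz1. apply Hfm. eapply lfp_pre; eauto.
Qed.

Definition bil (L : complete_lattice) : complete_lattice.
Proof.
  refine (@CompleteLattice (L * L) (@lep L) _ _ _
    (fun X => (sup (fun a => exists b, X (a, b)), inf (fun b => exists a, X (a, b)))) _ _
    (fun X => (inf (fun a => exists b, X (a, b)), sup (fun b => exists a, X (a, b)))) _ _).
  - intros x; split; apply le_refl.
  - intros x y z [H1 H2] [H3 H4]; split; eapply le_trans; eauto.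
  - intros [a b] [c d] [H1 H2] [H3 H4]; simpl in *. f_equal; apply le_antisym; auto.
  - intros X [a b] H; split; simpl.
    + apply sup_ub. exists b; exact H.
    + apply inf_lb. exists a; exact H.
  - intros X u H; split; simpl.
    + apply sup_least. intros a [b Hb]. apply (H _ Hb).
    + apply inf_greatest. intros b [a Ha]. apply (H _ Ha).
  - intros X [a b] H; split; simpl.
    + apply inf_lb. exists b; exact H.
    + apply sup_ub. exists a; exact H.
  - intros X u H; split; simpl.
    + apply inf_greatest. intros a [b Hb]. apply (H _ Hb).
    + apply sup_least. intros b [a Ha]. apply (H _ Ha).
Defined.

End Gen.

Theorem theorem3p4 (L K : complete_lattice) (f : L -> K)
  (Hmorph : lattice_morphism f) (Hsurj : surjective f)
  (O : L -> L) (A : L * L -> L * L)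
  (HA : approximator A O)
  (HOf : respects_op f O) (HAf : respects_approx f A)
  (Of : K -> K) (HOf_def : forall x, Of (f x) = f (O x))
  (Af : K * K -> K * K) (HAf_def : forall p, Af (f2 f p) = f2 f (A p))
  (x y : L) :
  wf_fixpoint A (x, y) -> wf_fixpoint Af (f x, f y).
Proof.
  destruct HA as [HAm _].
  assert (Hfm := fmono f Hmorph).
  assert (HAfm : forall p q, lep p q -> lep (Af p) (Af q)).
  { intros [u1 v1] [u2 v2] [H1 H2]; simpl in *.
    destruct (Hsurj u1) as [a1 <-]. destruct (Hsurj u2) as [a2 <-].
    destruct (Hsurj v1) as [b1 <-]. destruct (Hsurj v2) as [b2 <-].
    destruct (join_pre f Hmorph a1 a2 H1) as [a [Ha Ha1]].
    destruct (meet_pre f Hmorph b1 b2 H2) as [b [Hb Hb1]].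
    rewrite <- Ha, <- Hb.
    change (lep (Af (f2 f (a1, b1))) (Af (f2 f (a, b)))).
    rewrite !HAf_def. destruct (HAm (a1, b1) (a, b)) as [G1 G2]; [split; assumption|].
    split; apply Hfm; assumption. }
  set (S := fun p : L * L => (lfpM (fun z => fst (A (z, snd p))), lfpM (fun z => snd (A (fst p, z))))).
  set (Sf := fun p : K * K => (lfpM (fun z => fst (Af (z, snd p))), lfpM (fun z => snd (Af (fst p, z))))).
  assert (M1 : forall b, @monotone L (fun z => fst (A (z, b)))).
  { intros b z z' H. apply (HAm (z, b) (z', b)). split; [exact H | apply le_refl]. }
  assert (M2 : forall a, @monotone L (fun z => snd (A (a, z)))).
  { intros a z z' H. apply (HAm (a, z') (a, z)). split; [apply le_refl | exact H]. }
  assert (N1 : forall b, @monotone K (fun z => fst (Af (z, b)))).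
  { intros b z z' H. apply (HAfm (z, b) (z', b)). split; [exact H | apply le_refl]. }
  assert (N2 : forall a, @monotone K (fun z => snd (Af (a, z)))).
  { intros a z z' H. apply (HAfm (a, z') (a, z)). split; [apply le_refl | exact H]. }
  assert (Hfib : forall z : L, exists z1, f z1 = f z /\ forall z', f z' = f z -> le z' z1).
  { intros z. exists (sup (fun w => f w = f z)). split.
    - apply fib_sup; assumption.
    - intros z' Hz'. apply sup_ub. exact Hz'. }
  assert (Hcomm : forall p, Sf (f2 f p) = f2 f (S p)).
  { intros [a b]. unfold Sf, S, f2; simpl. f_equal.
    - symmetry. apply lfp_unique; [apply N1|].
      apply (transfer f Hfm Hsurj Hfib (fun z => fst (A (z, b)))); [apply M1| |apply lfp_spec, M1].
      intros z. change (fst (Af (f2 f (z, b))) = f (fst (A (z, b)))).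
      rewrite HAf_def. reflexivity.
    - symmetry. apply lfp_unique; [apply N2|].
      apply (transfer f Hfm Hsurj Hfib (fun z => snd (A (a, z)))); [apply M2| |apply lfp_spec, M2].
      intros z. change (snd (Af (f2 f (a, z))) = f (snd (A (a, z)))).
      rewrite HAf_def. reflexivity. }
  assert (SM : @monotone (bil L) S).
  { intros [a b] [a' b'] [H1 H2]; simpl in *. split; simpl; apply lfp_mono.
    - intros z. apply (HAm (z, b) (z, b')). split; [apply le_refl | exact H2].
    - intros z. apply (HAm (a, z) (a', z)). split; [exact H1 | apply le_refl]. }
  assert (stabL : forall p, partial_stable_fixpoint A p <-> S p = p).
  { intros [a b]. unfold partial_stable_fixpoint, S; simpl. split.
    - intros [H1 H2]. rewrite <- (lfp_unique _ _ (M1 b) H1), <- (lfp_unique _ _ (M2 a) H2).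
      reflexivity.
    - intros H. injection H as H1 H2. split.
      + rewrite <- H1. apply lfp_spec; auto.
      + rewrite <- H2. apply lfp_spec; auto. }
  assert (stabK : forall p, partial_stable_fixpoint Af p <-> Sf p = p).
  { intros [a b]. unfold partial_stable_fixpoint, Sf; simpl. split.
    - intros [H1 H2]. rewrite <- (lfp_unique _ _ (N1 b) H1), <- (lfp_unique _ _ (N2 a) H2).
      reflexivity.
    - intros H. injection H as H1 H2. split.
      + rewrite <- H1. apply lfp_spec; auto.
      + rewrite <- H2. apply lfp_spec; auto. }
  intros [Hst Hleast].
  assert (HL : @is_lfp (bil L) S (x, y)).
  { split. apply stabL; exact Hst. intros q Hq. apply Hleast. apply stabL; exact Hq. }
  assert (HK : @is_lfp (bil K) Sf (f2 f (x, y))).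
  { apply (@transfer (bil L) (bil K) (f2 f)) with (P := S); auto.
    - intros [a b] [c d] [H1 H2]; split; simpl in *; apply Hfm; assumption.
    - intros [u v]. destruct (Hsurj u) as [a <-]. destruct (Hsurj v) as [b <-].
      exists (a, b). reflexivity.
    - intros [a b]. exists (sup (fun w => f w = f a), inf (fun w => f w = f b)). split.
      + unfold f2; simpl. rewrite fib_sup, fib_inf; auto.
      + intros [c d] H. unfold f2 in H; simpl in H. injection H as H1 H2.
        split; simpl; [apply sup_ub | apply inf_lb]; assumption. }
  destruct HK as [HK1 HK2]. split.
  - apply stabK. exact HK1.
  - intros q Hq. apply (HK2 q). apply stabK. exact Hq.
Qed.
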